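(* Let $A$ be an $m\times m$ minimally non-totally unimodular matrix and let $x\in\mathbb{Q}^m$. The matrix $A'=[A\;x]$ obtained by adding the column $x$ to $A$ is totally equimodular if and only if $x=\mathbf 0$ or $x=\pm A^j$ for some column $A^j$ of $A$.
   Context: A matrix is totally unimodular if all its square submatrices have determinant in $\{0,\pm1\}$; it is minimally non-totally unimodular if it is not totally unimodular but all its proper submatrices are. An $m\times n$ matrix is equimodular if it has full row rank and all its nonzero $m\times m$ minors have the same absolute value; a matrix is totally equimodular if every set of linearly independent rows forms an equimodular matrix. *)

(* Defs.v *)
From HB Require Import structures.
From mathcomp Require Import all_boot all_order all_algebra.
Set Implicit Arguments. Unset Strict Implicit. Unset Printing Implicit Defensive.
Import Order.TTheory GRing.Theory Num.Theory.
Local Open Scope ring_scope.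

(* Totally unimodular: every square submatrix (rows f, columns g, injective
   index selections, possibly reordered -- reordering only changes the sign
   of the determinant) has determinant in {0, 1, -1}. *)
Definition totally_unimodular (m n : nat) (A : 'M[rat]_(m, n)) : Prop :=
  forall (k : nat) (f : 'I_k -> 'I_m) (g : 'I_k -> 'I_n),
    injective f -> injective g ->
    \det (mxsub f g A) \in [:: 0; 1; -1].

Definition minimally_non_TU (m n : nat) (A : 'M[rat]_(m, n)) : Prop :=
  ~ totally_unimodular A /\
  forall (p q : nat) (f : 'I_p -> 'I_m) (g : 'I_q -> 'I_n),
    injective f -> injective g -> (p < m)%N \/ (q < n)%N ->
    totally_unimodular (mxsub f g A).

Definition equimodular (p n : nat) (B : 'M[rat]_(p, n)) : Prop :=
  \rank B = p /\
  forall (g1 g2 : 'I_p -> 'I_n), injective g1 -> injective g2 ->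
    \det (colsub g1 B) != 0 -> \det (colsub g2 B) != 0 ->
    `|\det (colsub g1 B)| = `|\det (colsub g2 B)|.

Definition totally_equimodular (m n : nat) (B : 'M[rat]_(m, n)) : Prop :=
  forall (k : nat) (f : 'I_k -> 'I_m),
    injective f -> row_free (rowsub f B) -> equimodular (rowsub f B).

(* Main.v *)
Require Import Defs.
From Stdlib Require Import Classical.
From mathcomp Require Import all_boot all_order all_algebra all_fingroup.
From mathcomp Require Import lra ring.
Import GRing.Theory Num.Theory.
Local Open Scope ring_scope.
Set Implicit Arguments. Unset Strict Implicit.

Lemma det_sub_perm m (A : 'M[rat]_m) (f g : 'I_m -> 'I_m) :
  injective f -> injective g -> `|\det (mxsub f g A)| = `|\det A|.
Proof.
move=> fi gi.
have -> : mxsub f g A = perm_mx (perm fi) *m A *m perm_mx (perm gi)^-1.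
  by rewrite -row_permE -col_permE; apply/matrixP => a b; rewrite !mxE !permE.
by rewrite !det_mulmx !det_perm !normrM !normr_sign mul1r mulr1.
Qed.

Lemma det_sub_eq k m (A : 'M[rat]_m) (f g : 'I_k -> 'I_m) :
  k = m -> injective f -> injective g -> `|\det (mxsub f g A)| = `|\det A|.
Proof. by move=> E; subst k; apply: det_sub_perm. Qed.

Lemma inj_le k m (f : 'I_k -> 'I_m) : injective f -> (k <= m)%N.
Proof. by move=> fi; have := leq_card f fi; rewrite !card_ord. Qed.

Lemma TU_sub m (A : 'M[rat]_m) : minimally_non_TU A ->
  forall k (f g : 'I_k -> 'I_m) (M : 'M[rat]_k), injective f -> injective g ->
  (k < m)%N -> (forall a b, M a b = A (f a) (g b)) -> \det M \in [:: 0; 1; -1].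
Proof.
move=> [_ H] k f g M fi gi km HM.
have T := H k k f g fi gi (or_introl km).
have := T k id id (fun _ _ e => e) (fun _ _ e => e).
suff -> : M = mxsub id id (mxsub f g A) by [].
by apply/matrixP => a b; rewrite !mxE HM.
Qed.

Lemma det_nTU m (A : 'M[rat]_m) : minimally_non_TU A ->
  [/\ \det A != 0, \det A != 1 & \det A != -1].
Proof.
move=> mA; have [nT _] := mA.
have : exists k (f g : 'I_k -> 'I_m), [/\ injective f, injective g &
   \det (mxsub f g A) \notin [:: 0; 1; -1]].
  apply: NNPP => C; apply: nT => k f g fi gi.
  apply/negPn/negP => N; apply: C; exists k, f, g; split => //.
move=> [k [f [g [fi gi N]]]].
have [km|] := ltnP k m.
  by rewrite (@TU_sub _ _ mA _ _ _ (mxsub f g A) fi gi km (fun a b => ltac:(by rewrite mxE))) in N.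
move=> mk; have km : k = m by apply/eqP; rewrite eqn_leq mk (inj_le fi).
have E := det_sub_eq A km fi gi.
move: N; rewrite !inE negb_or negb_or => /and3P [N0 N1 N2].
split; apply/negP => /eqP D; move: E; rewrite D ?normr0 ?normr1 ?normrN ?normr1.
- by move/eqP; rewrite normr_eq0 (negbTE N0).
- by move/eqP; rewrite eqr_norml ler01 andbT orbC (negbTE N1) (negbTE N2).
- by move/eqP; rewrite eqr_norml ler01 andbT orbC (negbTE N1) (negbTE N2).
Qed.

Definition repl m (i : 'I_m) (v : 'cV[rat]_m) (A : 'M[rat]_m) : 'M[rat]_m :=
  \matrix_(a, b) if b == i then v a 0 else A a b.

Lemma det_repl m (i : 'I_m) v (A : 'M[rat]_m) :
  \det (repl i v A) = (\adj A *m v) i 0.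
Proof.
rewrite (expand_det_col _ i) mxE; apply: eq_bigr => a _.
rewrite !mxE eqxx mulrC; congr (_ * _).
rewrite /cofactor; congr (_ * \det _); apply/matrixP => p q; rewrite !mxE.
by rewrite eq_sym (negbTE (neq_lift _ _)).
Qed.

Lemma rowfree_sub k n (B : 'M[rat]_(k, n)) (g : 'I_k -> 'I_n) :
  \det (colsub g B) != 0 -> row_free B.
Proof.
move=> D.
have E : colsub g B = B *m (\matrix_(a, b) (a == g b)%:R).
  apply/matrixP => a b; rewrite !mxE (bigD1 (g b)) //= mxE eqxx mulr1 big1 ?addr0 //.
  by move=> c /negbTE nc; rewrite mxE nc mulr0.
have U : row_free (colsub g B) by rewrite row_free_unit unitmxE unitfE.
rewrite /row_free eqn_leq rank_leq_row /=.
by move: U; rewrite /row_free => /eqP {1}<-; rewrite E mxrankM_maxl.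
Qed.

Lemma lt_pred m (r : 'I_m) : (m.-1 < m)%N.
Proof. by case: m r => [[]|]. Qed.

Lemma cof_TU m (A : 'M[rat]_m) : minimally_non_TU A ->
  forall r c, cofactor A r c \in [:: 0; 1; -1].
Proof.
move=> mA r c.
have := @TU_sub _ _ mA _ _ _ (row' r (col' c A)) (@lift_inj _ r) (@lift_inj _ c) (lt_pred r)
  (fun a b => ltac:(by rewrite !mxE)).
rewrite /cofactor !inE => /or3P [] /eqP ->; rewrite ?mulr0 ?eqxx //;
  rewrite -signr_odd; case: (odd (r + c)); rewrite ?expr0 ?expr1 ?mulr1 ?mulrN1 ?opprK ?eqxx ?orbT //.
Qed.

Lemma in3P (x : rat) : x \in [:: 0; 1; -1] -> x = 0 \/ `|x| = 1.
Proof. by rewrite !inE => /or3P [] /eqP ->; rewrite ?normrN ?normr1; auto. Qed.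

Lemma sign_in3 n : ((-1) ^+ n : rat) \in [:: 0; 1; -1].
Proof. by rewrite -signr_odd; case: odd; rewrite ?expr0 ?expr1 !inE eqxx ?orbT. Qed.

Lemma in3N (x : rat) : x \in [:: 0; 1; -1] -> - x \in [:: 0; 1; -1].
Proof. by rewrite !inE => /or3P [] /eqP ->; rewrite ?oppr0 ?opprK eqxx ?orbT. Qed.

Lemma norm1P (x : rat) : `|x| = 1 -> x = 1 \/ x = -1.
Proof. by move/eqP; rewrite eqr_norml ler01 andbT => /orP [] /eqP; auto. Qed.

Lemma lt_pred2 m (r : 'I_m) : (m.-1.-1 < m)%N.
Proof. by case: m r => [[]|[|n]]. Qed.

Lemma cof_nz m (A : 'M[rat]_m) : minimally_non_TU A ->
  forall r l, cofactor A r l != 0.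
Proof.
move=> mA r l; apply/negP => /eqP C0.
have [d0 d1 dN1] := det_nTU mA.
have [j Cj] : exists j, cofactor A r j != 0.
  case: (pickP (fun j => cofactor A r j != 0)) => [j Hj|H]; first by exists j.
  move: d0; rewrite (expand_det_row _ r) big1 ?eqxx // => j _.
  by move: (H j) => /negbFE/eqP ->; rewrite mulr0.
have jl : j != l by apply/eqP => E; subst j; rewrite C0 eqxx in Cj.
have [l' El _] := unlift_some jl.
set N := row' r (col' j A).
have NTU : \det N \in [:: 0; 1; -1].
  apply: (@TU_sub _ _ mA _ _ _ N (@lift_inj _ r) (@lift_inj _ j) (lt_pred r)).
  by move=> a b; rewrite !mxE.
have N1 : `|\det N| = 1.
  case: (in3P NTU) => // N0; move: Cj; by rewrite /cofactor -/N N0 mulr0 eqxx.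
set u : 'rV[rat]_(m.-1) := \row_s \adj A l (lift r s).
have C1 : u *m N = \det A *: delta_mx 0 l'.
  apply/matrixP => z b; rewrite !mxE (ord1 z).
  have := congr1 (fun M : 'M_m => M l (lift j b)) (mul_adj_mx A).
  have E2 : (l == lift j b) = (l' == b) by rewrite El (inj_eq (@lift_inj _ j)).
  rewrite /= !mxE (bigD1_ord r) //= mxE C0 mul0r add0r E2 => H.
  rewrite eq_sym mulr_natr -H; apply: eq_bigr => s _; by rewrite !mxE.
have C2 : forall s, \det N * u 0 s = \det A * \adj N l' s.
  move=> s.
  have := congr1 (fun M : 'rV_(m.-1) => M 0 s) (esym (mulmxA u N (\adj N))).
  rewrite mul_mx_adj C1 mul_mx_scalar -scalemxAl -rowE !mxE /=.
  by rewrite mulrC => ->.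
have U0 : u = 0.
  apply/matrixP => z s; rewrite (ord1 z) [RHS]mxE.
  have Hu : u 0 s \in [:: 0; 1; -1] by rewrite mxE mxE; apply: cof_TU.
  have Hc : \adj N l' s \in [:: 0; 1; -1].
    rewrite mxE /cofactor.
    have := @TU_sub _ _ mA _ (fun a => lift r (lift s a)) (fun b => lift j (lift l' b))
      (row' s (col' l' N)) (fun a b e => lift_inj (lift_inj e))
      (fun a b e => lift_inj (lift_inj e)) (lt_pred2 r) (fun a b => ltac:(by rewrite !mxE)).
    move=> /in3P [->|/norm1P [] ->]; rewrite ?mulr0 ?mulr1 ?mulrN1;
      first [by rewrite inE eqxx | exact: sign_in3 | apply: in3N; exact: sign_in3].
  have := congr1 (fun t => `|t|) (C2 s); rewrite /= !normrM N1 mul1r.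
  case: (in3P Hu) => [-> _ //|U1]; rewrite U1.
  case: (in3P Hc) => [->|->]; first by rewrite mulr0.
  by rewrite mulr1 => /esym/norm1P [] D; [move: d1|move: dN1]; rewrite D eqxx.
move: C1; rewrite U0 mul0mx => /(congr1 (fun M : 'rV_(m.-1) => M 0 l')).
rewrite !mxE !eqxx mulr1 => /esym/eqP; by rewrite (negbTE d0).
Qed.

Lemma key_alg m (A : 'M[rat]_m) (x : 'cV[rat]_m) (i l : 'I_m) :
  i != l -> (\adj A *m x) i 0 != 0 -> forall r,
  \det A * cofactor (repl i x A) r l =
  (\adj A *m x) i 0 * \adj A l r - (\adj A *m x) l 0 * \adj A i r.
Proof.
move=> il wi0 r.
set w := \adj A *m x; set U := \adj A; set A' := repl i x A.
set vr := row l (\adj A').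
have F1 : forall c, (vr *m A') 0 c = \det A' * (l == c)%:R.
  move=> c; rewrite /vr -row_mul mul_adj_mx !mxE.
  by rewrite mulr_natr.
have dA' : \det A' = w i 0 by rewrite det_repl.
set b := (vr *m A) 0 i.
have P : vr *m A = w i 0 *: delta_mx 0 l + b *: delta_mx 0 i.
  have Ew : \sum_(j < m) (\adj A) i j * x j 0 = w i 0 by rewrite mxE.
  apply/matrixP => z c; rewrite (ord1 z) !mxE !eqxx /= Ew.
  case: (eqVneq c i) => [->|ci].
    by rewrite (negbTE il) mulr0 add0r mulr1 /b mxE.
  rewrite mulr0 addr0 -dA' eq_sym -F1 !mxE; apply: eq_bigr => s _.
  by rewrite !mxE (negbTE ci).
have F2 : (vr *m x) 0 0 = 0.
  have := F1 i; rewrite eq_sym (negbTE il) mulr0 => <-.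
  by rewrite !mxE; apply: eq_bigr => s _; rewrite !mxE eqxx.
have F3 : A *m w = \det A *: x by rewrite /w mulmxA mul_mx_adj mul_scalar_mx.
have Ew' : forall k, \sum_j (\adj A) k j * x j 0 = w k 0 by move=> k; rewrite mxE.
have Eb : b = - w l 0.
  have := congr1 (fun M : 'M_(1, 1) => M 0 0) (esym (mulmxA vr A w)).
  rewrite /= F3 -scalemxAr [X in _ = X -> _]mxE F2 mulr0 P mulmxDl -!scalemxAl -!rowE !mxE !Ew'.
  move/eqP; rewrite mulrC -mulrDl mulf_eq0 (negbTE wi0) orbF.
  by rewrite addr_eq0 => /eqP ->; rewrite opprK.
have := congr1 (fun M : 'M_(1, m) => M 0 r) (esym (mulmxA vr A U)).
rewrite /= /U mul_mx_adj mul_mx_scalar P mulmxDl -!scalemxAl -!rowE !mxE Eb.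
by rewrite !Ew' => <-; rewrite mulNr.
Qed.

Lemma inj_or_dup k m (F : 'I_k -> 'I_m) :
  injective F \/ exists b1 b2, b1 != b2 /\ F b1 = F b2.
Proof.
case: (boolP [exists b1, exists b2, (b1 != b2) && (F b1 == F b2)]).
  move=> /existsP [b1 /existsP [b2 /andP [ne /eqP E]]]; right; by exists b1, b2.
move=> N; left => b1 b2 E; apply/eqP; apply/negPn/negP => ne; move/negP: N; apply.
by apply/existsP; exists b1; apply/existsP; exists b2; rewrite ne E eqxx.
Qed.

Lemma TE_back m (A : 'M[rat]_m) (x : 'cV[rat]_m) (j : 'I_m) (e : rat) :
  minimally_non_TU A -> e \in [:: 0; 1; -1] -> x = e *: col j A ->
  totally_equimodular (row_mx A x).
Proof.
move=> mA He Ex k f fi RF; split; first by apply/eqP.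
pose h (c : 'I_(m + 1)) := match split c with inl a => a | inr _ => j end.
pose s (c : 'I_(m + 1)) := match split c with inl _ => 1 | inr _ => e end.
have key : forall g : 'I_k -> 'I_(m + 1), injective g ->
    \det (colsub g (rowsub f (row_mx A x))) != 0 ->
    `|\det (colsub g (rowsub f (row_mx A x)))| = if (k < m)%N then 1 else `|\det A|.
  move=> g gi D.
  have EM : colsub g (rowsub f (row_mx A x)) =
      mxsub f (h \o g) A *m diag_mx (\row_b s (g b)).
    apply/matrixP => a b; rewrite mul_mx_diag !mxE /h /s /=.
    by case: split => c; rewrite ?mulr1 // Ex !mxE mulrC.
  move: D; rewrite EM det_mulmx det_diag mulf_eq0 negb_or => /andP [D1 D2].
  have P1 : `|\prod_b (\row_b s (g b)) 0 b| = 1.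
    have : \prod_b `|(\row_b s (g b)) 0 b| \in [:: 0; 1].
      apply: (big_ind (fun t : rat => t \in [:: 0; 1])); first by rewrite !inE eqxx orbT.
        by move=> a b; rewrite !inE => /orP [] /eqP -> /orP [] /eqP ->;
          rewrite ?mul0r ?mulr0 ?mulr1 ?eqxx ?orbT.
      move=> b _; rewrite mxE /s; case: split => _; first by rewrite normr1 !inE eqxx orbT.
      by case: (in3P He) => ->; rewrite ?normr0 ?inE ?eqxx ?orbT.
    rewrite -normr_prod !inE => /orP [] /eqP // P0.
    by move: D2; rewrite -normr_eq0 P0 eqxx.
  have hgi : injective (h \o g).
    case: (inj_or_dup (h \o g)) => // [[b1 [b2 [ne E]]]].
    move: D1; rewrite -det_tr (determinant_alternate ne) ?eqxx //.
    by move=> a; rewrite !mxE E.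
  rewrite ?EM ?det_mulmx normrM P1 mulr1.
  case: ifP => km.
    case: (in3P (@TU_sub _ _ mA _ _ _ (mxsub f (h \o g) A) fi hgi km
       (fun a b => ltac:(by rewrite mxE)))) => // E0.
    by move: D1; rewrite E0 eqxx.
  apply: det_sub_eq => //; apply/eqP; by rewrite eqn_leq (inj_le fi) leqNgt km.
by move=> g1 g2 g1i g2i D1 D2; rewrite (key g1 g1i D1) (key g2 g2i D2).
Qed.

Lemma sel_inj k m (i : 'I_m) (h : 'I_k -> 'I_m) : injective h ->
  injective (fun b => if h b == i then rshift m (ord0 : 'I_1) else lshift 1 (h b)).
Proof.
move=> hi b1 b2 /=; case: eqP => E1; case: eqP => E2.
- by move=> _; apply: hi; rewrite E1 E2.
- by move/(congr1 val) => /= E; move: (ltn_ord (h b2)); rewrite -E addn0 ltnn.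
- by move/(congr1 val) => /= E; move: (ltn_ord (h b1)); rewrite E addn0 ltnn.
- by move/lshift_inj/hi.
Qed.

Lemma TE_fwd m (A : 'M[rat]_m) (x : 'cV[rat]_m) : minimally_non_TU A ->
  totally_equimodular (row_mx A x) ->
  x = 0 \/ exists j : 'I_m, x = col j A \/ x = - col j A.
Proof.
move=> mA TE; have [d0 d1 dN1] := det_nTU mA.
set w := \adj A *m x.
have F3 : A *m w = \det A *: x by rewrite /w mulmxA mul_mx_adj mul_scalar_mx.
have W : forall i, w i 0 != 0 -> `|w i 0| = `|\det A|.
  move=> i wi.
  have E1 : colsub (lshift 1) (rowsub id (row_mx A x)) = A.
    by apply/matrixP => a b; rewrite mxE mxE row_mxEl.
  have E2 : colsub (fun b => if id b == i then rshift m (ord0 : 'I_1) else lshift 1 (id b))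
      (rowsub id (row_mx A x)) = repl i x A.
    by apply/matrixP => a b; rewrite /repl [LHS]mxE [LHS]mxE [RHS]mxE /=; case: (b == i); rewrite ?row_mxEr ?row_mxEl.
  have RF : row_free (rowsub id (row_mx A x)).
    by apply: (@rowfree_sub _ _ _ (lshift 1)); rewrite E1.
  have [_ EQ] := TE m id (fun _ _ e => e) RF.
  have := EQ _ _ (@lshift_inj _ _) (@sel_inj _ _ i id (fun _ _ e => e)).
  by rewrite E1 E2 det_repl => H; symmetry; apply: H.
have NO : forall i l, i != l -> w i 0 != 0 -> w l 0 != 0 -> False.
  move=> i l il wi wl.
  set A' := repl i x A.
  have V : forall r, cofactor A' r l = 0.
    move=> r.
    set B := rowsub (lift r) (row_mx A x).
    have E1 : colsub (fun b => lshift 1 (lift i b)) B = row' r (col' i A).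
      by apply/matrixP => a b; rewrite [LHS]mxE [LHS]mxE [RHS]mxE [RHS]mxE row_mxEl.
    have E2 : colsub (fun b => if lift l b == i then rshift m (ord0 : 'I_1)
                               else lshift 1 (lift l b)) B = row' r (col' l A').
      by apply/matrixP => a b; rewrite /A' /repl [LHS]mxE [LHS]mxE [RHS]mxE [RHS]mxE [RHS]mxE /=;
        case: (lift l b == i); rewrite ?row_mxEr ?row_mxEl.
    have Ncof : forall M : 'M[rat]_m, forall a c,
        `|cofactor M a c| = `|\det (row' a (col' c M))|.
      by move=> M a c; rewrite /cofactor normrM normr_sign mul1r.
    have C1 : forall a c, `|cofactor A a c| = 1.
      move=> a c; case: (in3P (cof_TU mA a c)) => // C0.
      by move: (cof_nz mA a c); rewrite C0 eqxx.
    have D1 : `|\det (colsub (fun b => lshift 1 (lift i b)) B)| = 1.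
      by rewrite E1 -Ncof C1.
    have RF : row_free B.
      apply: (@rowfree_sub _ _ _ (fun b => lshift 1 (lift i b))).
      by rewrite -normr_eq0 D1 oner_eq0.
    have [_ EQ] := TE _ (lift r) (@lift_inj _ r) RF.
    have Hv : cofactor A' r l = 0 \/ `|cofactor A' r l| = 1.
      case: (eqVneq (\det (row' r (col' l A'))) 0) => h.
        by left; rewrite /cofactor h mulr0.
      right; rewrite Ncof -E2 -D1; apply: EQ.
      - apply: (@sel_inj _ _ i _ (@lift_inj _ l)).
      - by move=> b1 b2 /lshift_inj /lift_inj.
      - by rewrite E2.
      - by rewrite -normr_eq0 D1 oner_eq0.
    have K := key_alg il wi r; rewrite -/w -/A' in K.
    have Hi := W i wi; have Hl := W l wl.
    have S1 : forall t, `|t| = `|\det A| -> t = \det A \/ t = - \det A.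
      by move=> t /eqP; rewrite eqr_norm2 => /orP [] /eqP; auto.
    have U1 : forall a c, \adj A a c = 1 \/ \adj A a c = -1.
      by move=> a c; rewrite mxE; apply: norm1P; apply: C1.
    have Hv' : cofactor A' r l = 0 \/ cofactor A' r l = 1 \/ cofactor A' r l = -1.
      by case: Hv => [|/norm1P]; auto.
    have Ul := U1 l r; have Ui := U1 i r.
    have Hei : `|w i 0 / \det A| = 1 by rewrite normf_div Hi divff // normr_eq0.
    have Hel : `|w l 0 / \det A| = 1 by rewrite normf_div Hl divff // normr_eq0.
    have K' : cofactor A' r l = (w i 0 / \det A) * \adj A l r - (w l 0 / \det A) * \adj A i r.
      by apply: (mulfI d0); rewrite K; field.
    move: K'; case: (norm1P Hei) => ->; case: (norm1P Hel) => -> K'; lra.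
  have := congr1 (fun M : 'M_m => M l l) (mul_adj_mx A').
  rewrite /= !mxE big1 ?eqxx ?mulr1 /A' ?det_repl.
    by move/esym/eqP; rewrite (negbTE wi).
  by move=> c _; rewrite mxE V mul0r.
clearbody w.
case: (pickP (fun j => w j 0 != 0)) => [j wj | H].
  right; exists j.
  have Ax : forall a, \det A * x a 0 = A a j * w j 0.
    move=> a; have := congr1 (fun M : 'cV_m => M a 0) F3; rewrite /= !mxE => <-.
    rewrite (bigD1 j) //= big1 ?addr0 // => c cj.
    case: (eqVneq (w c 0) 0) => [->|wc]; first by rewrite mulr0.
    by case: (NO c j cj wc wj).
  have Hj := W j wj.
  move/eqP: Hj; rewrite eqr_norm2 => /orP [] /eqP Ej; [left|right];
    apply/matrixP => a z; rewrite (ord1 z) !mxE; apply: (mulfI d0); rewrite Ax Ej;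
    rewrite ?mulrN mulrC //.
left; apply/matrixP => a z; rewrite (ord1 z) mxE.
have := congr1 (fun M : 'cV_m => M a 0) F3; rewrite /= !mxE big1.
  by move/esym/eqP; rewrite mulf_eq0 (negbTE d0) => /eqP.
by move=> c _; move: (H c) => /negbFE/eqP ->; rewrite mulr0.
Qed.

Unset Implicit Arguments.

Theorem mainTheorem9 (m : nat) (A : 'M[rat]_m) (x : 'cV[rat]_m) :
  minimally_non_TU A ->
  (totally_equimodular (row_mx A x) <->
   (x = 0 \/ exists j : 'I_m, x = col j A \/ x = - col j A)).
Proof.
move=> mA; split; first exact: TE_fwd.
case=> [->|[j [->|->]]].
- have [_ d1 _] := det_nTU mA.
  case: m A x mA d1 => [|n] A x mA d1; first by rewrite det_mx00 eqxx in d1.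
  apply: (@TE_back _ A 0 ord0 0 mA); first by rewrite inE eqxx.
  by rewrite scale0r.
- apply: (@TE_back _ A _ j 1 mA); first by rewrite !inE eqxx orbT.
  by rewrite scale1r.
- apply: (@TE_back _ A _ j (-1) mA); first by rewrite !inE eqxx !orbT.
  by rewrite scaleN1r.
Qed.
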